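(* Let $B=\bigoplus_{i\in\mathbb{Z}}\mathbb{Z}_2$ and let $L_2=B\rtimes\mathbb{Z}$ be the lamplighter group, with elements written $((x_i),k)$ and multiplication $((x_i),k)\cdot((y_i),\ell)=((x_i+y_{i-k})_i,\,k+\ell)$. Equip $L_2$ with the word metric with respect to the generating set $\{t,at\}$, where $t=(0,1)$ and $at=(e_0,1)$ ($e_0$ the sequence with a single $1$ at index $0$); the corresponding Cayley graph is the Diestel–Leader graph $DL(2,2)$. Let $\Psi:L_2\to L_2$ be an isometry that is pattern preserving, i.e. there are a permutation $\sigma$ of the set of left cosets of $\langle t\rangle$ and a constant $C'\ge 0$ with $d_{\mathcal H}(\Psi(g\langle t\rangle),\sigma(g\langle t\rangle))<C'$ for all $g\in L_2$. Identify the left coset $((x_i),k)\langle t\rangle$ with $(x_i)\in B$, and let $\psi:B\to B$ be the induced permutation. Then there is $g=((z_i),k)\in L_2$ such that either $\psi=\lambda_g$ or $\psi=\lambda_g\circ\iota$, where $\lambda_g(x)=(z_i+x_{i-k})_i$ is the map induced by left multiplication by $g$ and $\iota((x_i)_i)=(x_{-i})_i$. In particular $\psi$ is a generalized affine map.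
   Context: $d_{\mathcal H}$ denotes Hausdorff distance. An affine map of $B$ is a map $x\mapsto\varphi(x)+c$ with $\varphi$ a group automorphism of $B$ and $c\in B$. A map of $B$ is generalized affine if it is the composition of an affine map of $B$ with a shift map $(x_i)\mapsto(x_{i+k})$ for some $k\in\mathbb{Z}$. *)

(* Defs.v *)
From HB Require Import structures.
From mathcomp Require Import all_boot all_order all_algebra finmap.
From mathcomp Require Import boolp.
Set Implicit Arguments. Unset Strict Implicit. Unset Printing Implicit Defensive.
Import Order.TTheory GRing.Theory Num.Theory.
Local Open Scope fset_scope.
Local Open Scope ring_scope.

(* B = (+)_{i in Z} Z_2, an element (x_i) being represented by its (finite)
   support {i | x_i = 1}; addition in B is symmetric difference. *)
Definition B := {fset int}.
Definition Badd (X Y : B) : B := (X `\` Y) `|` (Y `\` X).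
(* (shift k Y) is the support of (y_{i-k})_i *)
Definition shift (k : int) (Y : B) : B := [fset i + k | i in Y].

Definition L2 := (B * int)%type.
Definition lmul (g h : L2) : L2 := (Badd g.1 (shift g.2 h.1), g.2 + h.2).
Definition linv (g : L2) : L2 := (shift (- g.2) g.1, - g.2).
Definition t_gen : L2 := (fset0, 1).
Definition at_gen : L2 := ([fset (0 : int)], 1).
Definition gens : seq L2 := [:: t_gen; at_gen; linv t_gen; linv at_gen].

Fixpoint reach (n : nat) (g h : L2) : bool :=
  match n with
  | 0 => g == h
  | n'.+1 => has (fun s => reach n' (lmul g s) h) gens
  end.

(* word metric: least length of a path (0 if none exists; the graph is in fact
   connected) *)
Definition word_dist (g h : L2) : nat :=
  match pselect (exists n, reach n g h) with
  | left P => ex_minn P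
  | right _ => 0%N
  end.

Definition word_isometry (Psi : L2 -> L2) : Prop :=
  forall g h, word_dist (Psi g) (Psi h) = word_dist g h.

(* the left coset g<t> = {(x, k + n) : n in Z} of g = (x, k), indexed by x *)
Definition coset (x : B) : L2 -> Prop := fun h => h.1 = x.

Definition img (f : L2 -> L2) (A : L2 -> Prop) : L2 -> Prop :=
  fun h => exists a, A a /\ f a = h.

Definition hausdorff_lt (A A' : L2 -> Prop) (C : nat) : Prop :=
  (forall a, A a -> exists b, A' b /\ (word_dist a b < C)%N) /\
  (forall b, A' b -> exists a, A a /\ (word_dist b a < C)%N).

Definition lam (g : L2) (x : B) : B := (lmul g (x, 0)).1.
Definition iota_B (x : B) : B := [fset - i | i in x].

(* Main.v *)
Require Import Defs.
From HB Require Import structures.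
From mathcomp Require Import all_boot all_order all_algebra finmap.
From mathcomp Require Import boolp.
From mathcomp Require Import zify.
Set Implicit Arguments. Unset Strict Implicit. Unset Printing Implicit Defensive.
Import Order.TTheory GRing.Theory Num.Theory.
Local Open Scope fset_scope.
Local Open Scope ring_scope.

Lemma inBadd (X Y : B) i : (i \in Badd X Y) = (i \in X) (+) (i \in Y).
Proof. rewrite /Badd !inE; by case: (i \in X); case: (i \in Y). Qed.

Lemma inshift k (Y : B) i : (i \in shift k Y) = (i - k \in Y).
Proof.
apply/imfsetP/idP => [[j /= jY ->]|H]; first by rewrite addrK.
by exists (i - k) => //; rewrite subrK.
Qed.

Lemma B_ext (X Y : B) : (forall i, (i \in X) = (i \in Y)) -> X = Y.
Proof. by move=> H; apply/fsetP. Qed.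

Lemma Badd0 X : Badd X fset0 = X.
Proof. by apply: B_ext => i; rewrite inBadd inE addbF. Qed.

Lemma BaddK X Y : Badd X (Badd X Y) = Y.
Proof. by apply: B_ext => i; rewrite !inBadd addKb. Qed.

Lemma BaddC X Y : Badd X Y = Badd Y X.
Proof. by apply: B_ext => i; rewrite !inBadd addbC. Qed.

Lemma BaddA X Y Z : Badd X (Badd Y Z) = Badd (Badd X Y) Z.
Proof. by apply: B_ext => i; rewrite !inBadd addbA. Qed.

Lemma Baddxx X : Badd X X = fset0.
Proof. by apply: B_ext => i; rewrite !inBadd addbb inE. Qed.

Lemma lmul_t x k : lmul (x, k) t_gen = (x, k + 1).
Proof.
rewrite /lmul /=; congr (_, _); apply: B_ext => i.
by rewrite inBadd inshift inE addbF.
Qed.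

Lemma lmul_at x k : lmul (x, k) at_gen = (Badd x [fset k], k + 1).
Proof.
rewrite /lmul /=; congr (_, _); apply: B_ext => i.
by rewrite !inBadd inshift !inE subr_eq0.
Qed.

Lemma lmul_ti x k : lmul (x, k) (linv t_gen) = (x, k - 1).
Proof.
rewrite /lmul /=; congr (_, _); apply: B_ext => i.
by rewrite inBadd inshift inshift inE addbF.
Qed.

Lemma lmul_ati x k : lmul (x, k) (linv at_gen) = (Badd x [fset k - 1], k - 1).
Proof.
rewrite /lmul /=; congr (_, _); apply: B_ext => i.
rewrite !inBadd inshift inshift !inE; congr (_ (+) _).
apply/eqP/eqP; lia.
Qed.

Lemma reach_trans n m g h h' : reach n g h -> reach m h h' -> reach (n + m) g h'.
Proof.
elim: n g => [|n IH] g; first by move=> /= /eqP->.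
change (has (fun s => reach n (lmul g s) h) gens -> reach m h h' ->
  has (fun s => reach (n + m) (lmul g s) h') gens).
move=> /seq.hasP [s sg H1] H2; apply/seq.hasP; exists s => //; exact: IH.
Qed.

Lemma sweep_up (n : nat) x k E : (forall i, i \in E -> k <= i < k + n%:Z) ->
  reach n (x, k) (Badd x E, k + n%:Z).
Proof.
elim: n x k E => [|n IH] x k E HE.
  have -> : E = fset0.
    apply: B_ext => i; rewrite inE; apply/negP => /HE; lia.
  by rewrite Badd0 addr0 /=.
rewrite /=.
case kE: (k \in E).
- apply/orP; right; apply/orP; left; rewrite lmul_at.
  have -> : Badd x E = Badd (Badd x [fset k]) (Badd E [fset k]).
    by apply: B_ext => j; rewrite !inBadd; case: (j \in x); case: (j \in E); case: (j \in [fset k]).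
  have -> : k + n.+1%:Z = (k + 1) + n%:Z by lia.
  apply: IH => i; rewrite inBadd inE.
  case iE: (i \in E); case: (eqVneq i k) => [e|ne] //=.
  2: by rewrite e kE in iE.
  move=> _; move/HE: iE => /andP [h1 h2]; move/eqP: ne => ne; apply/andP; split; lia.
- apply/orP; left; rewrite lmul_t.
  have -> : k + n.+1%:Z = (k + 1) + n%:Z by lia.
  apply: IH => i iE; have := HE _ iE; have : i != k by apply: contraTneq iE => ->; rewrite kE.
  move=> /eqP ne /andP [h1 h2]; apply/andP; split; lia.
Qed.

Lemma sweep_down (n : nat) x k E : (forall i, i \in E -> k - n%:Z <= i < k) ->
  reach n (x, k) (Badd x E, k - n%:Z).
Proof.
elim: n x k E => [|n IH] x k E HE.
  have -> : E = fset0.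
    apply: B_ext => i; rewrite inE; apply/negP => /HE; lia.
  by rewrite Badd0 subr0 /=.
rewrite /=.
case kE: (k - 1 \in E).
- apply/orP; right; apply/orP; right; apply/orP; right; apply/orP; left; rewrite lmul_ati.
  have -> : Badd x E = Badd (Badd x [fset k - 1]) (Badd E [fset k - 1]).
    by apply: B_ext => j; rewrite !inBadd; case: (j \in x); case: (j \in E); case: (j \in [fset _]).
  have -> : k - n.+1%:Z = (k - 1) - n%:Z by lia.
  apply: IH => i; rewrite inBadd inE.
  case iE: (i \in E); case: (eqVneq i (k - 1)) => [e|ne] //=.
  2: by rewrite e kE in iE.
  move=> _; move/HE: iE => /andP [h1 h2]; move/eqP: ne => ne; apply/andP; split; lia.
- apply/orP; right; apply/orP; right; apply/orP; left; rewrite lmul_ti.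
  have -> : k - n.+1%:Z = (k - 1) - n%:Z by lia.
  apply: IH => i iE; have := HE _ iE; have : i != k - 1 by apply: contraTneq iE => ->; rewrite kE.
  move=> /eqP ne /andP [h1 h2]; apply/andP; split; lia.
Qed.

Definition cover (D : B) (k l lo hi : int) : Prop :=
  [/\ lo <= k, lo <= l, k <= hi, l <= hi & forall i, i \in D -> lo <= i < hi].
Definition cost (k l lo hi : int) : int := 2 * (hi - lo) - `|k - l|.

Lemma step_up D D' k l lo hi : (forall i, i \in D -> i \in D' \/ i = k) ->
  cover D' (k + 1) l lo hi ->
  exists lo' hi', cover D k l lo' hi' /\ cost k l lo' hi' <= cost (k + 1) l lo hi + 1.
Proof.
move=> HD [h1 h2 h3 h4 h5]; exists (Num.min lo k), hi; split; last by rewrite /cost; lia.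
split; try lia.
move=> i /HD [/h5 /andP [a b]|->]; apply/andP; split; lia.
Qed.

Lemma step_down D D' k l lo hi : (forall i, i \in D -> i \in D' \/ i = k - 1) ->
  cover D' (k - 1) l lo hi ->
  exists lo' hi', cover D k l lo' hi' /\ cost k l lo' hi' <= cost (k - 1) l lo hi + 1.
Proof.
move=> HD [h1 h2 h3 h4 h5]; exists lo, (Num.max hi k); split; last by rewrite /cost; lia.
split; try lia.
move=> i /HD [/h5 /andP [a b]|->]; apply/andP; split; lia.
Qed.

Lemma memstep x y a i : i \in Badd x y -> i \in Badd (Badd x [fset a]) y \/ i = a.
Proof.
rewrite !inBadd inE; case: (eqVneq i a) => [->|_]; first by right.
by rewrite addbF; left.
Qed.

Lemma reach_lower n x k y l : reach n (x, k) (y, l) ->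
  exists lo hi, cover (Badd x y) k l lo hi /\ cost k l lo hi <= n%:Z.
Proof.
elim: n x k => [|n IH] x k.
  move=> /= /eqP [-> ->]; exists l, l; split; last by rewrite /cost; lia.
  by split => // i; rewrite Baddxx inE.
rewrite /= lmul_t lmul_at lmul_ti lmul_ati orbF.
case/orP => [/IH [lo [hi [C1 C2]]]|/orP [/IH [lo [hi [C1 C2]]]|/orP [/IH [lo [hi [C1 C2]]]|/IH [lo [hi [C1 C2]]]]]].
- have [lo' [hi' [C3 C4]]] := step_up (fun i (H : i \in Badd x y) => or_introl H) C1.
  by exists lo', hi'; split => //; rewrite /cost in C2 C4 *; lia.
- have [lo' [hi' [C3 C4]]] := step_up (@memstep x y k) C1.
  by exists lo', hi'; split => //; rewrite /cost in C2 C4 *; lia.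
- have [lo' [hi' [C3 C4]]] := step_down (fun i (H : i \in Badd x y) => or_introl H) C1.
  by exists lo', hi'; split => //; rewrite /cost in C2 C4 *; lia.
- have [lo' [hi' [C3 C4]]] := step_down (@memstep x y (k - 1)) C1.
  by exists lo', hi'; split => //; rewrite /cost in C2 C4 *; lia.
Qed.

Lemma int_nat (z : int) : 0 <= z -> exists n : nat, z = n%:Z.
Proof. by case: z => n // _; exists n. Qed.

Lemma reach_upper x k y l lo hi : cover (Badd x y) k l lo hi ->
  exists n : nat, n%:Z = cost k l lo hi /\ reach n (x, k) (y, l).
Proof.
move=> [h1 h2 h3 h4 h5].
have [n2 e2] : exists n : nat, hi - lo = n%:Z by apply: int_nat; lia.
have R2 : reach n2 (x, lo) (y, hi).
  have := @sweep_up n2 x lo (Badd x y).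
  rewrite BaddK -e2 addrC subrK; apply => i /h5; lia.
case: (lerP k l) => kl.
- have [n1 e1] : exists n : nat, k - lo = n%:Z by apply: int_nat; lia.
  have [n3 e3] : exists n : nat, hi - l = n%:Z by apply: int_nat; lia.
  have R1 : reach n1 (x, k) (x, lo).
    have := @sweep_down n1 x k fset0; rewrite Badd0 -e1 opprB addrC subrK.
    by apply => i; rewrite inE.
  have R3 : reach n3 (y, hi) (y, l).
    have := @sweep_down n3 y hi fset0; rewrite Badd0 -e3 opprB addrC subrK.
    by apply => i; rewrite inE.
  exists (n1 + n2 + n3)%N; split; last by apply: reach_trans R3; apply: reach_trans R2.
  rewrite /cost; lia.
- have [n1 e1] : exists n : nat, hi - k = n%:Z by apply: int_nat; lia.
  have [n3 e3] : exists n : nat, l - lo = n%:Z by apply: int_nat; lia.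
  have R1 : reach n1 (x, k) (x, hi).
    have := @sweep_up n1 x k fset0; rewrite Badd0 -e1 addrC subrK.
    by apply => i; rewrite inE.
  have R2' : reach n2 (x, hi) (y, lo).
    have := @sweep_down n2 x hi (Badd x y).
    rewrite BaddK -e2 opprB addrC subrK; apply => i /h5; lia.
  have R3 : reach n3 (y, lo) (y, l).
    have := @sweep_up n3 y lo fset0; rewrite Badd0 -e3 addrC subrK.
    by apply => i; rewrite inE.
  exists (n1 + n2 + n3)%N; split; last by apply: reach_trans R3; apply: reach_trans R2'.
  rewrite /cost; lia.
Qed.

Lemma seq_bound (s : seq int) : exists M : int, forall i, i \in s -> - M <= i <= M.
Proof.
elim: s => [|a s [M HM]]; first by exists 0.
exists (`|M| + `|a|) => i; rewrite inE => /orP [/eqP ->|/HM]; lia.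
Qed.

Lemma cover_exists x k y l : exists lo hi, cover (Badd x y) k l lo hi.
Proof.
have [M HM] := seq_bound (Badd x y).
exists (- `|M| - `|k| - `|l|), (`|M| + `|k| + `|l| + 1); split; try lia.
by move=> i /HM; lia.
Qed.

Lemma reach_exists x k y l : exists n, reach n (x, k) (y, l).
Proof.
have [lo [hi C]] := cover_exists x k y l.
by have [n [_ R]] := reach_upper C; exists n.
Qed.

Lemma dist_le x k y l lo hi : cover (Badd x y) k l lo hi ->
  (word_dist (x, k) (y, l))%:Z <= cost k l lo hi.
Proof.
move=> C; have [n [e R]] := reach_upper C.
rewrite /word_dist; case: pselect => [P|nP]; last by exfalso; apply: nP; exists n.
case: ex_minnP => m _ Hmin; have := Hmin n R; lia.
Qed.

Lemma dist_ge x k y l : exists lo hi, cover (Badd x y) k l lo hi /\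
  cost k l lo hi <= (word_dist (x, k) (y, l))%:Z.
Proof.
rewrite /word_dist; case: pselect => [P|nP]; last by exfalso; apply: nP; exact: reach_exists.
case: ex_minnP => m Hm _; exact: reach_lower Hm.
Qed.

Lemma dist_sym g h : word_dist g h = word_dist h g.
Proof.
case: g => x k; case: h => y l.
have H : forall x k y l, (word_dist (y, l) (x, k) <= word_dist (x, k) (y, l))%N.
  move=> x0 k0 y0 l0; have [lo [hi [[c1 c2 c3 c4 c5] C]]] := dist_ge x0 k0 y0 l0.
  have C' : cover (Badd y0 x0) l0 k0 lo hi by split => // i; rewrite BaddC; apply: c5.
  have := dist_le C'; rewrite /cost in C *; lia.
by apply/eqP; rewrite eqn_leq !H.
Qed.

Lemma dist_reach g h : reach (word_dist g h) g h.
Proof.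
case: g => x k; case: h => y l.
rewrite /word_dist; case: pselect => [P|nP]; last by exfalso; apply: nP; exact: reach_exists.
by case: ex_minnP.
Qed.

Lemma dist_min n g h : reach n g h -> (word_dist g h <= n)%N.
Proof.
move=> R; rewrite /word_dist; case: pselect => [P|nP]; last by exfalso; apply: nP; exists n.
by case: ex_minnP => m _ /(_ n R).
Qed.

Lemma dist_tri g h f : (word_dist g f <= word_dist g h + word_dist h f)%N.
Proof. apply: dist_min; apply: reach_trans; exact: dist_reach. Qed.

Lemma dist_height x (k : int) y (l : int) : `|k - l| <= (word_dist (x, k) (y, l))%:Z.
Proof. have [lo [hi [[c1 c2 c3 c4 c5] C]]] := dist_ge x k y l; rewrite /cost in C; lia. Qed.

Lemma dist_same x (k l : int) : (word_dist (x, k) (x, l))%:Z = `|k - l|.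
Proof.
apply/eqP; rewrite eq_le dist_height andbT.
have C : cover (Badd x x) k l (Num.min k l) (Num.max k l).
  by split; try lia; move=> i; rewrite Baddxx inE.
have := dist_le C; rewrite /cost; lia.
Qed.

Lemma dist_single X Y (a b e : int) : Badd X Y = [fset e] ->
  (word_dist (X, a) (Y, b))%:Z =
  2 * (Num.max (Num.max a b) (e + 1) - Num.min (Num.min a b) e) - `|a - b|.
Proof.
move=> E.
have C : cover (Badd X Y) a b (Num.min (Num.min a b) e) (Num.max (Num.max a b) (e + 1)).
  split; try lia; move=> i; rewrite E inE => /eqP ->; lia.
have [lo [hi [[c1 c2 c3 c4 c5] C2]]] := dist_ge X a Y b.
have := c5 e; rewrite E inE eqxx => /(_ isT) H.
have := dist_le C; rewrite /cost in C2 *; lia.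
Qed.

Lemma Badd_eq0 X Y : Badd X Y = fset0 -> X = Y.
Proof.
move=> E; apply: B_ext => i; have := congr1 (fun Z : B => i \in Z) E.
by rewrite /= inBadd inE; case: (i \in X); case: (i \in Y).
Qed.

Lemma adjacent_single X Y (a b : int) : X <> Y -> word_dist (X, a) (Y, b) = 1%N ->
  Badd X Y = [fset Num.min a b] /\ `|a - b| = 1.
Proof.
move=> ne d1.
have [lo [hi [[c1 c2 c3 c4 c5] C2]]] := dist_ge X a Y b.
rewrite d1 /cost in C2.
have [e eE] : exists e, e \in Badd X Y.
  case: (boolP (Badd X Y == fset0)) => [/eqP/Badd_eq0 //|/fset0Pn [e He]]; by exists e.
have := c5 e eE => /andP [h1 h2].
have E : Badd X Y = [fset lo].
  apply: B_ext => i; rewrite inE; apply/idP/eqP => [/c5 /andP [i1 i2]|->]; first lia.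
  have -> : lo = e by lia.
  done.
split; last lia.
by rewrite E; congr [fset _]; lia.
Qed.

Lemma mem_rel (z1 z2 X : B) i : (i \in Badd z1 z2) = (i \in Badd z1 X) (+) (i \in Badd z2 X).
Proof. by rewrite !inBadd; case: (i \in z1); case: (i \in z2); case: (i \in X). Qed.

Lemma triple (zk zj zl X : B) (hk hj hl c : int) :
  (forall i, i \in Badd zk X -> hk - c <= i <= hk + c) ->
  (forall i, i \in Badd zj X -> hj - c <= i <= hj + c) ->
  (forall i, i \in Badd zl X -> hl - c <= i <= hl + c) ->
  0 <= c -> hk + 2 * c < hj -> hj + 2 * c < hl ->
  (word_dist (zk, hk) (zj, hj) + word_dist (zj, hj) (zl, hl) <= word_dist (zk, hk) (zl, hl))%N ->
  Badd zj X = fset0.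
Proof.
move=> Bk Bj Bl c0 s1 s2 Hd.
apply: B_ext => e; rewrite inE; apply/negP => eE.
have [lo1 [hi1 [[a1 a2 a3 a4 a5] C1]]] := dist_ge zk hk zj hj.
have [lo2 [hi2 [[b1 b2 b3 b4 b5] C2]]] := dist_ge zj hj zl hl.
have nkj : forall i, i \in Badd zk X -> (i \in Badd zj X) = false.
  move=> i /Bk H1; apply/negP => /Bj H2; lia.
have nlj : forall i, i \in Badd zl X -> (i \in Badd zj X) = false.
  move=> i /Bl H1; apply/negP => /Bj H2; lia.
have ek : (e \in Badd zk X) = false.
  by apply/negP => /nkj; rewrite eE.
have el : (e \in Badd zl X) = false.
  by apply/negP => /nlj; rewrite eE.
have C : cover (Badd zk zl) hk hl lo1 hi2.
  split; try lia.
  move=> i; rewrite (mem_rel _ _ X).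
  case ik: (i \in Badd zk X); case il: (i \in Badd zl X) => //= _.
  - have := a5 i; rewrite (mem_rel _ _ X) ik nkj //= => /(_ isT).
    move/Bk: ik; lia.
  - have := b5 i; rewrite (mem_rel _ _ X) il nlj //= => /(_ isT).
    move/Bl: il; lia.
have := a5 e; rewrite (mem_rel _ _ X) ek eE /= => /(_ isT) E1.
have := b5 e; rewrite (mem_rel _ _ X) el eE /= => /(_ isT) E2.
have := dist_le C; rewrite /cost in C1 C2 *; lia.
Qed.

Lemma iso_Z (f : int -> int) : (forall k l, `|f k - f l| = `|k - l|) ->
  (forall k, f k = f 0 + k) \/ (forall k, f k = f 0 - k).
Proof.
move=> H; have := H 1 0; move=> h10.
have [e|e] : f 1 = f 0 + 1 \/ f 1 = f 0 - 1 by lia.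
- left => k; have := H k 0; have := H k 1; lia.
- right => k; have := H k 0; have := H k 1; lia.
Qed.

Definition HH (Psi : L2 -> L2) (psi : B -> B) (C' : nat) :=
  forall g : L2, hausdorff_lt (img Psi (coset g.1)) (coset (psi g.1)) C'.

Lemma near_info Psi psi C' (Hh : HH Psi psi C') x (k : int) :
  exists h' : int, `|(Psi (x, k)).2 - h'| < C'%:Z /\ (word_dist (Psi (x, k)) (psi x, h') < C')%N /\
  forall i, i \in Badd (Psi (x, k)).1 (psi x) ->
    (Psi (x, k)).2 - C'%:Z <= i <= (Psi (x, k)).2 + C'%:Z.
Proof.
have [H1 _] := Hh (x, 0).
have [[b1 b2] [/= cb db]] := H1 (Psi (x, k)) (ex_intro _ (x, k) (conj erefl erefl)).
rewrite /coset /= in cb; subst b1.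
exists b2; move: db; case: (Psi (x, k)) => z h /= db.
have [lo [hi [[c1 c2 c3 c4 c5] C]]] := dist_ge z h (psi x) b2.
rewrite /cost in C; split; first lia.
split => // i /c5; lia.
Qed.

Lemma psi_dist Psi (Hiso : word_isometry Psi) x (k l : int) :
  (word_dist (Psi (x, k)) (Psi (x, l)))%:Z = `|k - l|.
Proof. by rewrite Hiso dist_same. Qed.

Lemma F3 Psi (Hiso : word_isometry Psi) x (k l : int) :
  `|(Psi (x, k)).2 - (Psi (x, l)).2| <= `|k - l|.
Proof.
rewrite -(psi_dist Hiso x k l).
case: (Psi (x, k)) => z h; case: (Psi (x, l)) => z' h'; exact: dist_height.
Qed.

Lemma F4 Psi psi C' (Hiso : word_isometry Psi) (Hh : HH Psi psi C') x (k l : int) :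
  `|k - l| <= `|(Psi (x, k)).2 - (Psi (x, l)).2| + 4 * C'%:Z.
Proof.
have [hk [ek [dk _]]] := near_info Hh x k.
have [hl [el [dl _]]] := near_info Hh x l.
rewrite -(psi_dist Hiso x k l).
have T1 := dist_tri (Psi (x, k)) (psi x, hk) (Psi (x, l)).
have T2 := dist_tri (psi x, hk) (psi x, hl) (Psi (x, l)).
have S := dist_same (psi x) hk hl.
rewrite (dist_sym (psi x, hl)) in T2.
lia.
Qed.

Lemma coset_exact Psi psi C' (Hiso : word_isometry Psi) (Hh : HH Psi psi C') x (j : int) :
  (Psi (x, j)).1 = psi x.
Proof.
have [N eN] : exists N : int, N = 8 * C'%:Z + 10 by eexists.
have [hk [_ [_ Bk]]] := near_info Hh x (j - N).
have [hj [_ [_ Bj]]] := near_info Hh x j.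
have [hl [_ [_ Bl]]] := near_info Hh x (j + N).
have f1 := F3 Hiso x (j - N) j.
have f2 := F3 Hiso x j (j + N).
have f3 := F3 Hiso x (j - N) (j + N).
have g1 := F4 Hiso Hh x (j - N) j.
have g2 := F4 Hiso Hh x j (j + N).
have g3 := F4 Hiso Hh x (j - N) (j + N).
have d1 := psi_dist Hiso x (j - N) j.
have d2 := psi_dist Hiso x j (j + N).
have d3 := psi_dist Hiso x (j - N) (j + N).
have c0 : 0 <= C'%:Z by [].
move: Bk Bj Bl f1 f2 f3 g1 g2 g3 d1 d2 d3.
case: (Psi (x, j - N)) => zk Hk; case: (Psi (x, j)) => zj Hj; case: (Psi (x, j + N)) => zl Hl /=.
move=> Bk Bj Bl f1 f2 f3 g1 g2 g3 d1 d2 d3.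
apply: Badd_eq0.
have [[o1 o2]|[o1 o2]] : (Hk + 2 * C'%:Z < Hj /\ Hj + 2 * C'%:Z < Hl) \/ (Hl + 2 * C'%:Z < Hj /\ Hj + 2 * C'%:Z < Hk).
  lia.
- apply: (triple Bk Bj Bl c0 o1 o2).
  lia.
- apply: (triple Bl Bj Bk c0 o1 o2).
  rewrite (dist_sym (zl, Hl) (zj, Hj)) (dist_sym (zj, Hj) (zk, Hk)) (dist_sym (zl, Hl) (zk, Hk)).
  lia.
Qed.

Lemma coset_param Psi psi C' (Hiso : word_isometry Psi) (Hh : HH Psi psi C') x :
  exists (b : bool) (s : int), forall k, Psi (x, k) = (psi x, if b then k + s else - k + s).
Proof.
pose f k := (Psi (x, k)).2.
have Pk : forall k, Psi (x, k) = (psi x, f k).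
  by move=> k; rewrite -(coset_exact Hiso Hh x k) /f; case: (Psi (x, k)).
have : forall k l, `|f k - f l| = `|k - l|.
  by move=> k l; rewrite -(psi_dist Hiso x k l) !Pk dist_same.
case/iso_Z => H.
- exists true, (f 0) => k; by rewrite Pk H addrC.
- exists false, (f 0) => k; by rewrite Pk H addrC.
Qed.

Lemma neighbor Psi (Hiso : word_isometry Psi) x y X Y (m : int) (bx bY : bool) (sx sy : int) :
  Badd x y = [fset m] -> X <> Y ->
  (forall k, Psi (x, k) = (X, if bx then k + sx else - k + sx)) ->
  (forall k, Psi (y, k) = (Y, if bY then k + sy else - k + sy)) ->
  bx = bY /\ sx = sy /\ Badd X Y = [fset (if bx then m + sx else - m - 1 + sx)].
Proof.
move=> Exy nXY Hx Hy.
pose hx (k : int) : int := if bx then k + sx else - k + sx.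
pose hy (k : int) : int := if bY then k + sy else - k + sy.
have Q : forall k l, (word_dist (x, k) (y, l))%:Z = (word_dist (X, hx k) (Y, hy l))%:Z.
  by move=> k l; rewrite -Hx -Hy Hiso.
have q1 : (word_dist (X, hx m) (Y, hy (m + 1)))%:Z = 1.
  by rewrite -Q (dist_single _ _ Exy); lia.
have w1 : word_dist (X, hx m) (Y, hy (m + 1)) = 1%N by lia.
have [EXY a1] := @adjacent_single X Y (hx m) (hy (m + 1)) nXY w1.
have q2 : (word_dist (X, hx (m + 1)) (Y, hy m))%:Z = 1.
  by rewrite -Q (dist_single _ _ Exy); lia.
have q3 : (word_dist (X, hx (m - 1)) (Y, hy (m - 1)))%:Z = 4.
  by rewrite -Q (dist_single _ _ Exy); lia.
have q4 : (word_dist (X, hx (m + 2)) (Y, hy (m + 2)))%:Z = 4.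
  by rewrite -Q (dist_single _ _ Exy); lia.
rewrite (dist_single _ _ EXY) in q2; rewrite (dist_single _ _ EXY) in q3; rewrite (dist_single _ _ EXY) in q4.
rewrite EXY.
move: a1 q2 q3 q4; rewrite /hx /hy.
clear Q q1 w1 EXY Hx Hy hx hy.
case: bx; case: bY => /= a1 q2 q3 q4.
- have [e|e] : sx = sy \/ sx = sy + 2 by lia.
  + subst sx; split => //; split => //; congr [fset _]; lia.
  + subst sx; exfalso; move: q2; clear q3 q4; lia.
- exfalso.
  have [e|e] : sx = sy - 2 * m \/ sx = sy - 2 * m - 2 by lia.
  + subst sx; move: q3; clear q2 q4; lia.
  + subst sx; move: q4; clear q2 q3; lia.
- exfalso.
  have [e|e] : sx = sy + 2 * m \/ sx = sy + 2 * m + 2 by lia.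
  + subst sx; move: q3; clear q2 q4; lia.
  + subst sx; move: q4; clear q2 q3; lia.
- have [e|e] : sx = sy \/ sx = sy - 2 by lia.
  + subst sx; split => //; split => //; congr [fset _]; lia.
  + subst sx; exfalso; move: q2; clear q3 q4; lia.
Qed.

Lemma iniota (x : B) i : (i \in iota_B x) = (- i \in x).
Proof.
apply/imfsetP/idP => [[j /= jx ->]|H]; first by rewrite opprK.
by exists (- i) => //; rewrite opprK.
Qed.

Lemma shift0 s : shift s fset0 = fset0.
Proof. by apply: B_ext => i; rewrite inshift !inE. Qed.

Lemma iota0 : iota_B fset0 = fset0.
Proof. by apply: B_ext => i; rewrite iniota !inE. Qed.

Lemma setL1 (X0 x : B) (m s : int) : m \notin x ->
  Badd (Badd X0 (shift s x)) [fset m + s] = Badd X0 (shift s (m |` x)).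
Proof.
move=> nm; apply: B_ext => i; rewrite !inBadd !inshift !inE.
have -> : (i == m + s) = (i - s == m) by apply/eqP/eqP; lia.
case: eqVneq => [E|NE] /=; last by rewrite addbF.
by rewrite E (negbTE nm) addbT; case: (i \in X0).
Qed.

Lemma setL2 (X0 x : B) (m s : int) : m \notin x ->
  Badd (Badd X0 (shift (s - 1) (iota_B x))) [fset - m - 1 + s] =
  Badd X0 (shift (s - 1) (iota_B (m |` x))).
Proof.
move=> nm; apply: B_ext => i; rewrite !inBadd !inshift !iniota !inE.
have -> : (i == - m - 1 + s) = (- (i - (s - 1)) == m) by apply/eqP/eqP; lia.
case: eqVneq => [E|NE] /=; last by rewrite addbF.
by rewrite E (negbTE nm) addbT; case: (i \in X0).
Qed.

Theorem theorem1p1 (Psi : L2 -> L2) (psi : B -> B) (C' : nat) :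
  ssrfun.bijective Psi -> word_isometry Psi ->
  ssrfun.bijective psi ->
  (forall g : L2, hausdorff_lt (img Psi (coset g.1)) (coset (psi g.1)) C') ->
  exists g : L2, (forall x, psi x = lam g x) \/ (forall x, psi x = lam g (iota_B x)).
Proof.
move=> _ Hiso [psi' psiK _] Hh.
have Hh' : HH Psi psi C' := Hh.
have inj := can_inj psiK.
have [b0 [s0 P0]] := coset_param Hiso Hh' fset0.
pose X0 := psi fset0.
have claim : forall x, (forall k, Psi (x, k) = (psi x, if b0 then k + s0 else - k + s0)) /\
  psi x = (if b0 then Badd X0 (shift s0 x) else Badd X0 (shift (s0 - 1) (iota_B x))).
  elim/fset1U_rect.
    split => //; by case: b0 {P0}; rewrite ?iota0 shift0 Badd0.
  move=> m x' nm [IH1 IH2].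
  have [b [s P]] := coset_param Hiso Hh' (m |` x').
  have Exy : Badd x' (m |` x') = [fset m].
    apply: B_ext => i; rewrite inBadd !inE.
    case: eqVneq => [->|] /=; first by rewrite (negbTE nm).
    by case: (i \in x').
  have nXY : psi x' <> psi (m |` x').
    move/inj => E; move: (fset1U1 m x'); rewrite -E; by rewrite (negbTE nm).
  have [eb [es EXY]] := neighbor Hiso Exy nXY IH1 P.
  subst b s; split => //.
  rewrite -(BaddK (psi x') (psi (m |` x'))) EXY IH2.
  by case: (b0); [apply: setL1 | apply: setL2].
case: (b0) claim => claim.
- exists (X0, s0); left => x; by rewrite (proj2 (claim x)).
- exists (X0, s0 - 1); right => x; by rewrite (proj2 (claim x)).
Qed.
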